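(* Let $a,b$ be distinct positive real numbers and write $A=A(a,b)$, $G=G(a,b)$, $L=L(a,b)$, $I=I(a,b)$. Then $$L(A^2,G^2)=\frac{A+G}{2}\,L(A,G)>\frac{A+G}{2}\,L>L^2,$$ $$L(I,G)<L,$$ $$L<L(I,L)<L\cdot\frac{I-L}{L-G}.$$
   Context: For positive reals $x\neq y$: $A(x,y)=\frac{x+y}{2}$, $G(x,y)=\sqrt{xy}$, logarithmic mean $L(x,y)=\frac{x-y}{\log x-\log y}$, identric mean $I(x,y)=\frac{1}{e}\left(\frac{x^x}{y^y}\right)^{1/(x-y)}$. *)

(* Defs.v *)
From Stdlib Require Import Reals.
Open Scope R_scope.

Definition AM (x y : R) : R := (x + y) / 2.
Definition GM (x y : R) : R := sqrt (x * y).
Definition LM (x y : R) : R := (x - y) / (ln x - ln y).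
(* identric mean: (1/e) (x^x / y^y)^(1/(x-y)), written via exp/ln for x,y > 0 *)
Definition IM (x y : R) : R :=
  / exp 1 * exp ((x * ln x - y * ln y) / (x - y)).

(* Main.v *)
Require Import Defs.
From Stdlib Require Import Reals.
From Stdlib Require Import Lra Lia.
From Coquelicot Require Import Coquelicot.
Open Scope R_scope.

Definition ch (x : R) := (exp x + exp (- x)) / 2.
Definition sh (x : R) := (exp x - exp (- x)) / 2.

Lemma mono_pos (f f' : R -> R) (a b : R) : a < b ->
  (forall x, a <= x <= b -> is_derive f x (f' x)) ->
  (forall x, a < x < b -> 0 < f' x) -> f a < f b.
Proof.
  intros hab hd hp.
  destruct (MVT_cor2 f f' a b hab) as [c [hc1 hc2]].
  - intros c hc. apply is_derive_Reals. apply hd. exact hc.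
  - assert (0 < f' c) by (apply hp; exact hc2). nra.
Qed.

Lemma exp_pos' x : 0 < exp x. Proof. apply exp_pos. Qed.

Lemma expm x : exp (- x) = / exp x. Proof. apply exp_Ropp. Qed.

Lemma exp_gt1 t : 0 < t -> 1 < exp t.
Proof. intros. rewrite <- exp_0. apply exp_increasing. lra. Qed.

Lemma ch_sh t : ch t * ch t - sh t * sh t = 1.
Proof. unfold ch, sh. rewrite expm. field. apply Rgt_not_eq, exp_pos. Qed.

Lemma ch_gt1 t : 0 < t -> 1 < ch t.
Proof. intros. pose proof (exp_gt1 t H). unfold ch. rewrite expm.
  set (x := exp t) in *. assert (x + / x > 2).
  { assert (x + /x - 2 = (x-1)*(x-1)/x) by (field; lra). 
    assert ((x-1)*(x-1)/x > 0). { apply Rdiv_lt_0_compat; nra. } lra. }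
  lra. Qed.

Lemma sh_pos t : 0 < t -> 0 < sh t.
Proof. intros. pose proof (exp_gt1 t H). unfold sh. rewrite expm.
  set (x := exp t) in *. assert (/x < 1). { rewrite <- Rinv_1. apply Rinv_lt_contravar; lra. } lra. Qed.

Lemma ch_pos t : 0 < ch t.
Proof. unfold ch. pose proof (exp_pos t). pose proof (exp_pos (-t)). lra. Qed.

Lemma d_ch x : is_derive ch x (sh x).
Proof. unfold ch, sh. auto_derive; auto. lra. Qed.
Lemma d_sh x : is_derive sh x (ch x).
Proof. unfold ch, sh. auto_derive; auto. lra. Qed.


Ltac dsolve := unfold ch, sh; auto_derive; repeat split; auto; try (rewrite ?expm; field; repeat split; try (apply Rgt_not_eq; apply exp_pos); auto).

Lemma sh0 : sh 0 = 0. Proof. unfold sh; rewrite Ropp_0; lra. Qed.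
Lemma ch0 : ch 0 = 1. Proof. unfold ch; rewrite Ropp_0, exp_0; lra. Qed.

Lemma sh_gt_t t : 0 < t -> t < sh t.
Proof. intros ht.
  assert (H := mono_pos (fun x => sh x - x) (fun x => ch x - 1) 0 t ht).
  cbv beta in H. rewrite sh0 in H. enough (0 - 0 < sh t - t) by lra. apply H.
  - intros. dsolve.
  - intros. pose proof (ch_gt1 x). lra.
Qed.

Lemma sh_lt_tch t : 0 < t -> sh t < t * ch t.
Proof. intros ht.
  assert (H := mono_pos (fun x => x * ch x - sh x) (fun x => x * sh x) 0 t ht).
  cbv beta in H. rewrite sh0 in H. enough (0 * ch 0 - 0 < t * ch t - sh t) by lra. apply H.
  - intros. dsolve.
  - intros. pose proof (sh_pos x). nra.
Qed.

Lemma P1 t : 0 < t -> 2 * sh t < t * (ch t + 1).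
Proof. intros ht.
  assert (H := mono_pos (fun x => x * (ch x + 1) - 2 * sh x) (fun x => 1 - ch x + x * sh x) 0 t ht).
  cbv beta in H. rewrite sh0, ch0 in H. enough (0 < t * (ch t + 1) - 2 * sh t) by lra.
  replace 0 with (0 * (1 + 1) - 2 * 0) by ring. apply H.
  - intros. dsolve.
  - intros x hx.
    assert (H2 := mono_pos (fun y => 1 - ch y + y * sh y) (fun y => y * ch y) 0 x (proj1 hx)).
    cbv beta in H2. rewrite sh0, ch0 in H2. replace 0 with (1 - 1 + 0 * 0) by ring. apply H2.
    + intros. dsolve.
    + intros. pose proof (ch_pos x0). nra.
Qed.

Lemma P2 t : 0 < t -> ln (ch t) < t * sh t / (ch t + 1).
Proof. intros ht.
  assert (H := mono_pos (fun x => x * sh x / (ch x + 1) - ln (ch x))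
     (fun x => (x * ch x - sh x) / (ch x * (ch x + 1))) 0 t ht).
  cbv beta in H. rewrite sh0, ch0, ln_1 in H.
  enough (0 < t * sh t / (ch t + 1) - ln (ch t)) by lra.
  replace 0 with (0 * 0 / (1 + 1) - 0) by field. apply H.
  - intros. unfold ch, sh. auto_derive.
    + repeat split; auto. pose proof (exp_pos x); pose proof (exp_pos (-x)); lra.
      pose proof (exp_pos x); pose proof (exp_pos (-x)); lra.
    + rewrite ?expm. pose proof (exp_pos x) as ex. field. repeat split; try lra.
      1-2: apply Rgt_not_eq; nra.
  - intros x hx. pose proof (sh_lt_tch x (proj1 hx)). pose proof (ch_pos x).
    apply Rdiv_lt_0_compat; nra.
Qed.

Lemma B1 u : 0 < u -> (u - u^3/3) * ch u < sh u.
Proof. intros hu.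
  assert (H := mono_pos (fun x => sh x - (x - x^3/3) * ch x) (fun x => x^2 * ch x - x * sh x + x^3 * sh x / 3) 0 u hu).
  cbv beta in H. rewrite sh0, ch0 in H.
  enough (0 - (0 - 0^3/3) * 1 < sh u - (u - u^3/3) * ch u) by (simpl in *; lra).
  apply H.
  - intros. dsolve.
  - intros x hx. pose proof (sh_lt_tch x (proj1 hx)). pose proof (sh_pos x (proj1 hx)).
    assert (0 < x * (x * ch x - sh x)) by (apply Rmult_lt_0_compat; lra).
    assert (0 < x^3 * sh x) by (apply Rmult_lt_0_compat; [apply pow_lt|]; lra).
    nra.
Qed.

Lemma B2 u : 0 < u -> u^2 + u^4/3 < sh u * sh u.
Proof. intros hu.
  assert (H := mono_pos (fun x => sh x * sh x - x^2 - x^4/3) (fun x => 2 * sh x * ch x - 2 * x - 4 * x^3/3) 0 u hu).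
  cbv beta in H. rewrite sh0 in H.
  enough (0 * 0 - 0^2 - 0^4/3 < sh u * sh u - u^2 - u^4/3) by (simpl in *; lra).
  apply H.
  - intros. dsolve.
  - intros x hx.
    assert (H2 := mono_pos (fun y => 2 * sh y * ch y - 2 * y - 4 * y^3/3) (fun y => 4 * sh y * sh y - 4 * y^2) 0 x (proj1 hx)).
    cbv beta in H2. rewrite sh0, ch0 in H2. enough (2 * 0 * 1 - 2 * 0 - 4 * 0^3/3 < 2 * sh x * ch x - 2 * x - 4 * x^3/3) by (simpl in *; lra). apply H2.
    + intros y hy. unfold ch, sh. auto_derive; auto. rewrite ?expm. field. apply Rgt_not_eq, exp_pos.
    + intros y hy. pose proof (sh_gt_t y (proj1 hy)). nra.
Qed.

Lemma sh2 u : sh (2*u) = 2 * sh u * ch u.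
Proof. unfold sh, ch. replace (2*u) with (u+u) by ring. rewrite Ropp_plus_distr, !exp_plus, !expm.
  field. apply Rgt_not_eq, exp_pos. Qed.
Lemma ch2 u : ch (2*u) = 1 + 2 * sh u * sh u.
Proof. unfold sh, ch. replace (2*u) with (u+u) by ring. rewrite Ropp_plus_distr, !exp_plus, !expm.
  field. apply Rgt_not_eq, exp_pos. Qed.

Lemma Qpos t : 0 < t -> 0 < sh t * sh t + t * sh t - t^2 * (1 + ch t).
Proof. intros ht. replace t with (2 * (t/2)) by field. set (u := t/2). assert (hu : 0 < u) by (unfold u; lra).
  rewrite sh2, ch2. pose proof (B1 u hu). pose proof (B2 u hu). pose proof (ch_sh u).
  pose proof (ch_gt1 u hu). pose proof (sh_pos u hu).
  set (s := sh u) in *. set (c := ch u) in *.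
  (* Q = 4c(s^2 c + u s - 2u^2 c) *)
  assert (0 < s*s*c + u*s - 2*u^2*c).
  { assert ((u^2 + u^4/3) * c < s*s*c) by nra.
    assert (u * ((u - u^3/3)*c) < u * s) by nra. nra. }
  nra.
Qed.

Lemma pos_from_lim (f f' : R -> R) t : 0 < t ->
  (forall x, 0 < x -> is_derive f x (f' x)) -> (forall x, 0 < x -> 0 < f' x) ->
  (forall d s, 0 < d -> 0 < s -> exists e, 0 < e < s /\ - d < f e) -> 0 < f t.
Proof. intros ht hd hp hl.
  assert (h1 : f (t/2) < f t).
  { apply (mono_pos f f'). lra. intros; apply hd; lra. intros; apply hp; lra. }
  destruct (Rle_or_lt 0 (f (t/2))) as [h|h]. lra.
  destruct (hl (- f (t/2)) (t/2)) as [e [he1 he2]]; try lra.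
  assert (f e < f (t/2)). { apply (mono_pos f f'). lra. intros; apply hd; lra. intros; apply hp; lra. }
  lra.
Qed.

Lemma small_ch d s : 0 < d -> 0 < s -> exists e, 0 < e < s /\ ch e - 1 < d.
Proof. intros hd hs. set (e := Rmin (s/2) (Rmin 1 (d/4))).
  assert (e <= s/2) by apply Rmin_l. assert (e <= Rmin 1 (d/4)) by apply Rmin_r.
  assert (Rmin 1 (d/4) <= 1) by apply Rmin_l. assert (Rmin 1 (d/4) <= d/4) by apply Rmin_r.
  assert (0 < e). { unfold e. apply Rmin_pos. lra. apply Rmin_pos; lra. }
  exists e. split. lra.
  assert (exp e <= 3). { apply Rle_trans with (exp 1). destruct (Req_dec e 1) as [E|E]. rewrite E; lra.
      left; apply exp_increasing; lra. apply exp_le_3. }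
  assert (1 + - e < exp (- e)) by (apply exp_ineq1; lra).
  rewrite expm in H5. pose proof (exp_pos e).
  assert (exp e - 1 < e * exp e). { assert (H7: exp e * (1 + -e) < exp e * / exp e) by (apply Rmult_lt_compat_l; lra).
    rewrite Rinv_r in H7 by lra. nra. }
  assert (1 < exp e) by (apply exp_gt1; lra).
  unfold ch. rewrite expm. assert (/ exp e <= 1).
  { rewrite <- Rinv_1. apply Rinv_le_contravar; lra. }
  assert (e * exp e <= e * 3) by (apply Rmult_le_compat_l; lra).
  lra.
Qed.

Lemma ln_lt_sub1 y : 0 < y -> y <> 1 -> ln y < y - 1.
Proof. intros. assert (ln y <> 0). { intro h. apply H0. rewrite <- (exp_ln y H), h. apply exp_0. }
  pose proof (exp_ineq1 _ H1). rewrite exp_ln in H2; lra. Qed.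
Lemma ln_le_sub1 y : 0 < y -> ln y <= y - 1.
Proof. intros. destruct (Req_dec y 1). subst; rewrite ln_1; lra. left; apply ln_lt_sub1; auto. Qed.

Lemma P4 t : 0 < t -> ln (sh t / t) < t * (ch t + 1) / sh t - 2.
Proof. intros ht.
  enough (0 < t * (ch t + 1) / sh t - 2 - ln (sh t / t)) by lra.
  pose proof (pos_from_lim (fun x => x * (ch x + 1) / sh x - 2 - ln (sh x / x))
     (fun x => (sh x * sh x + x * sh x - x^2 * (1 + ch x)) / (x * sh x * sh x)) t ht) as K.
  cbv beta in K. apply K; clear K.
  - intros x hx. pose proof (sh_pos x hx). pose proof (sh_gt_t x hx). unfold ch, sh in *. auto_derive.
    + repeat split; try lra. apply Rdiv_lt_0_compat; lra.
    + rewrite ?expm in *. pose proof (exp_pos x) as ex. field. repeat split; try lra.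
      pose proof (exp_gt1 x hx). apply Rgt_not_eq. nra.
  - intros x hx. pose proof (Qpos x hx). pose proof (sh_pos x hx). apply Rdiv_lt_0_compat; auto.
    apply Rmult_lt_0_compat; auto. apply Rmult_lt_0_compat; auto.
  - intros d s hd hs. destruct (small_ch d s hd hs) as [e [he1 he2]]. exists e. split; auto.
    pose proof (P1 e (proj1 he1)). pose proof (sh_pos e (proj1 he1)).
    pose proof (sh_lt_tch e (proj1 he1)).
    assert (2 <= e * (ch e + 1) / sh e). { apply Rmult_le_reg_r with (sh e); auto. unfold Rdiv. rewrite Rmult_assoc, Rinv_l; lra. }
    assert (sh e / e < ch e). { apply Rmult_lt_reg_r with e. lra. unfold Rdiv. rewrite Rmult_assoc, Rinv_l; lra. }
    pose proof (ln_le_sub1 (sh e / e) ltac:(apply Rdiv_lt_0_compat; lra)). lra.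
Qed.

Lemma ps_exp k t : is_pseries (fun n => k^n / INR (Factorial.fact n)) t (exp (k*t)).
Proof. pose proof (is_exp_Reals (k*t)) as H. unfold is_pseries in *.
  eapply is_series_ext; [|exact H]. intros n. rewrite !pow_n_pow.
  unfold scal; simpl; unfold mult; simpl. rewrite Rpow_mult_distr. field. apply INR_fact_neq_0.
Qed.

Definition term (j : nat) (k : R) := PS_incr_n (fun n => k^n / INR (Factorial.fact n)) j.

Lemma ps_term j k t : is_pseries (term j k) t (t^j * exp (k*t)).
Proof. pose proof (is_pseries_incr_n _ j t _ (ps_exp k t)) as H. rewrite pow_n_pow in H. exact H. Qed.

Lemma ps_lin (a b : nat -> R) al bl (c : R) t : is_pseries a t al -> is_pseries b t bl ->
  is_pseries (fun n => c * a n + b n) t (c * al + bl).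
Proof. intros ha hb. pose proof (is_pseries_plus _ _ _ _ _ (is_pseries_scal c _ _ _ (Rmult_comm _ _) ha) hb) as H.
  exact H. Qed.

Lemma ps_pos (a : nat -> R) t l N : 0 < t -> is_pseries a t l -> (forall n, 0 <= a n) -> 0 < a N -> 0 < l.
Proof. intros ht hs hn hN. unfold is_pseries, is_series in hs.
  set (u := fun k => scal (pow_n t k) (a k)) in *.
  assert (hu : forall k, u k = t^k * a k). { intros; unfold u; rewrite pow_n_pow; reflexivity. }
  assert (hnn : forall n, 0 <= sum_n u n).
  { induction n. rewrite sum_O, hu. apply Rmult_le_pos; [apply pow_le; lra| apply hn].
    rewrite sum_Sn. change (plus (sum_n u n) (u (S n))) with (sum_n u n + u (S n)). rewrite hu.
    assert (0 <= t ^ S n * a (S n)) by (apply Rmult_le_pos; [apply pow_le; lra| apply hn]). lra. }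
  assert (hge : forall n, (N <= n)%nat -> t^N * a N <= sum_n u n).
  { intros n hnN. induction n. assert (N = 0%nat) by lia. subst. rewrite sum_O, hu. lra.
    rewrite sum_Sn. change (plus (sum_n u n) (u (S n))) with (sum_n u n + u (S n)). rewrite hu.
    destruct (Nat.eq_dec N (S n)). subst. pose proof (hnn n). lra.
    assert (0 <= t ^ S n * a (S n)) by (apply Rmult_le_pos; [apply pow_le; lra| apply hn]).
    assert (t ^ N * a N <= sum_n u n) by (apply IHn; lia). lra. }
  assert (hl : is_lim_seq (sum_n u) l) by exact hs.
  pose proof (is_lim_seq_le_loc (fun _ => t^N * a N) (sum_n u) (t^N * a N) l) as K.
  simpl in K. assert (t ^ N * a N <= l). { apply K. exists N. intros; apply hge; auto.
    apply is_lim_seq_const. exact hl. }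
  assert (0 < t^N * a N) by (apply Rmult_lt_0_compat; [apply pow_lt; lra| auto]). lra.
Qed.

Definition cc (n : nat) : R :=
  term 0 3 n - term 0 (Ropp 3) n - 3 * term 0 1 n + 3 * term 0 (Ropp 1) n
  - 2 * term 2 2 n + 2 * term 2 (Ropp 2) n - 8 * term 2 1 n + 8 * term 2 (Ropp 1) n
  + 8 * term 3 0 n + 4 * term 3 1 n + 4 * term 3 (Ropp 1) n.

Lemma negpow k m : (-k)^m = (-1)^m * k^m.
Proof. rewrite <- Rpow_mult_distr. f_equal; ring. Qed.

Definition Y (m : nat) : R := let x := INR m in
  3^(m+3) - 3 - (2^(m+2) + 8) * (x+3) * (x+2) + 4 * (x+3) * (x+2) * (x+1).

Lemma term_simpl j k m : term j k (m + j)%nat = k^m / INR (Factorial.fact m).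
Proof. unfold term. rewrite PS_incr_n_simplify. destruct (Compare_dec.le_lt_dec j (m+j)). 
  f_equal. f_equal. f_equal. f_equal. lia. f_equal. f_equal. lia. lia. Qed.

Lemma cc_formula m : cc (m+3) = ((1 + (-1)^m) * Y m + 8 * 0^m * (INR m + 3) * (INR m + 2) * (INR m + 1))
   / INR (Factorial.fact (m+3)).
Proof. unfold cc.
  replace (m+3)%nat with ((m+3)+0)%nat by lia. rewrite !(term_simpl 0).
  replace (m+3+0)%nat with ((m+1)+2)%nat by lia. rewrite !(term_simpl 2).
  replace (m+1+2)%nat with (m+3)%nat by lia. rewrite !(term_simpl 3).
  unfold Y. rewrite !negpow.
  replace (m+3)%nat with (S (S (S m))) by lia. replace (m+1)%nat with (S m) by lia.
  replace (m+2)%nat with (S (S m)) by lia.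
  cbn [Factorial.fact]. rewrite !mult_INR, !S_INR. simpl pow.
  rewrite !pow1. field. pose proof (INR_fact_neq_0 m). pose proof (pos_INR m). repeat split; try lra.
Qed.

Lemma pm1 m : (-1)^m = 1 \/ (-1)^m = -1.
Proof. induction m. left; simpl; ring. simpl. destruct IHm as [h|h]; rewrite h; [right|left]; ring. Qed.

Lemma growth p : 2^(p+8) * (INR p + 9) * (INR p + 8) + 8 * (INR p + 9) * (INR p + 8) + 3 < 3^(p+9).
Proof. induction p.
  - simpl. lra.
  - rewrite S_INR. replace (S p + 8)%nat with (S (p+8)) by lia. replace (S p + 9)%nat with (S (p+9)) by lia.
    simpl pow. pose proof (pos_INR p). assert (0 < 2^(p+8)) by (apply pow_lt; lra).
    assert (0 <= 2^(p+8) * (INR p + 9) * (INR p + 4)) by (apply Rmult_le_pos; [apply Rmult_le_pos|]; lra).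
    nra.
Qed.

Lemma Y_pos m : (2 <= m)%nat -> 0 <= Y m.
Proof. intros hm.
  destruct m as [|[|[|[|[|[|m]]]]]]; try lia; try (unfold Y; simpl; lra).
  replace (S (S (S (S (S (S m)))))) with (m + 6)%nat by lia.
  pose proof (growth m). unfold Y. rewrite plus_INR. simpl INR.
  replace (m + 6 + 3)%nat with (m+9)%nat by lia. replace (m + 6 + 2)%nat with (m+8)%nat by lia.
  pose proof (pos_INR m).
  assert (0 <= (INR m + 9) * (INR m + 8) * (INR m + 7)) by (apply Rmult_le_pos; [apply Rmult_le_pos|]; lra).
  nra.
Qed.

Lemma cc_nonneg n : 0 <= cc n.
Proof.
  destruct (Nat.lt_ge_cases n 3) as [h|h].
  - destruct n as [|[|[|n]]]; try lia; unfold cc, term; rewrite !PS_incr_n_simplify; simpl; unfold zero; simpl; lra.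
  - replace n with ((n-3)+3)%nat by lia. set (m := (n-3)%nat). rewrite cc_formula.
    apply Rmult_le_pos; [| left; apply Rinv_0_lt_compat, INR_fact_lt_0].
    destruct m as [|[|m]].
    + unfold Y; simpl; lra.
    + unfold Y; simpl; lra.
    + rewrite pow_i by lia. pose proof (Y_pos (S (S m)) ltac:(lia)).
      destruct (pm1 (S (S m))) as [e|e]; rewrite e; nra.
Qed.

Lemma cc9 : 0 < cc 9.
Proof. replace 9%nat with (6+3)%nat by lia. rewrite cc_formula.
  apply Rmult_lt_0_compat; [| apply Rinv_0_lt_compat, INR_fact_lt_0].
  pose proof (growth 0). unfold Y. simpl in *. lra.
Qed.

Lemma ps_scal1 (a : nat -> R) al (c : R) t : is_pseries a t al ->
  is_pseries (fun n => c * a n) t (c * al).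
Proof. intros ha. exact (is_pseries_scal c _ _ _ (Rmult_comm _ _) ha). Qed.

Definition VV t := (1 * (t^0 * exp (3 * t)) + (-1 * (t^0 * exp (Ropp 3 * t)) + (-3 * (t^0 * exp (1 * t)) + (3 * (t^0 * exp (Ropp 1 * t)) + (-2 * (t^2 * exp (2 * t)) + (2 * (t^2 * exp (Ropp 2 * t)) + (-8 * (t^2 * exp (1 * t)) + (8 * (t^2 * exp (Ropp 1 * t)) + (8 * (t^3 * exp (0 * t)) + (4 * (t^3 * exp (1 * t)) + 4 * (t^3 * exp (Ropp 1 * t)))))))))))).

Lemma ps_cc t : is_pseries cc t (VV t).
Proof.
  pose proof (ps_lin _ _ _ _ 1 t (ps_term 0 3 t)
    (ps_lin _ _ _ _ (-1) t (ps_term 0 (Ropp 3) t)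
    (ps_lin _ _ _ _ (-3) t (ps_term 0 1 t)
    (ps_lin _ _ _ _ 3 t (ps_term 0 (Ropp 1) t)
    (ps_lin _ _ _ _ (-2) t (ps_term 2 2 t)
    (ps_lin _ _ _ _ 2 t (ps_term 2 (Ropp 2) t)
    (ps_lin _ _ _ _ (-8) t (ps_term 2 1 t)
    (ps_lin _ _ _ _ 8 t (ps_term 2 (Ropp 1) t)
    (ps_lin _ _ _ _ 8 t (ps_term 3 0 t)
    (ps_lin _ _ _ _ 4 t (ps_term 3 1 t)
    (ps_scal1 _ _ 4 t (ps_term 3 (Ropp 1) t)))))))))))) as H.
  eapply is_pseries_ext; [|exact H]. intros n. unfold cc. match goal with |- ?a = ?b => change (a = b :> R) end. ring.
Qed.


Lemma Hf_pos t : 0 < t -> 0 < sh t ^ 3 - t^2 * sh t * (ch t + 2) + t^3 * (1 + ch t).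
Proof. intros ht.
  assert (E : VV t = 8 * (sh t ^ 3 - t^2 * sh t * (ch t + 2) + t^3 * (1 + ch t))).
  { unfold VV, ch, sh.
    replace (3*t) with (t+(t+t)) by ring. replace (Ropp 3 * t) with (-t + (-t + -t)) by ring.
    replace (1*t) with t by ring. replace (Ropp 1 * t) with (-t) by ring.
    replace (2*t) with (t+t) by ring. replace (Ropp 2 * t) with (-t + -t) by ring.
    replace (0*t) with 0 by ring. rewrite !exp_plus, exp_0, !expm. field. apply Rgt_not_eq, exp_pos. }
  pose proof (ps_pos cc t (VV t) 9 ht (ps_cc t) cc_nonneg cc9). lra.
Qed.

Lemma tanh_poly x : 0 < x -> exp x * exp x - 1 < x * (exp x * exp x + 1).
Proof. intros hx. pose proof (sh_lt_tch x hx). unfold ch, sh in H. rewrite expm in H.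
  pose proof (exp_pos x). set (E := exp x) in *.
  assert (E * ((E - /E)/2) < E * (x * ((E + /E)/2))) by (apply Rmult_lt_compat_l; auto).
  replace (E * ((E - /E)/2)) with ((E*E - 1)/2) in H1 by (field; lra).
  replace (E * (x * ((E + /E)/2))) with (x * (E*E + 1)/2) in H1 by (field; lra). lra. Qed.

Lemma P3 t : 0 < t -> exp (t * ch t / sh t - 1) < 1 + ch t - sh t / t.
Proof. intros ht.
  pose proof (sh_pos t ht) as hs. pose proof (sh_lt_tch t ht) as hst.
  assert (hu : 1 <= 1 + ch t - sh t / t).
  { assert (sh t / t <= ch t). { apply Rmult_le_reg_r with t; auto. unfold Rdiv. rewrite Rmult_assoc, Rinv_l; lra. } lra. }
  enough (0 < ln (1 + ch t - sh t / t) - (t * ch t / sh t - 1)).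
  { rewrite <- (exp_ln (1 + ch t - sh t / t)) by lra. apply exp_increasing. lra. }
  pose proof (pos_from_lim (fun x => ln (1 + ch x - sh x / x) - (x * ch x / sh x - 1))
     (fun x => (sh x ^ 3 - x^2 * sh x * (ch x + 2) + x^3 * (1 + ch x)) / (x^2 * (1 + ch x - sh x / x) * (sh x * sh x))) t ht) as K.
  cbv beta in K. apply K; clear K.
  - intros x hx. pose proof (sh_pos x hx). pose proof (sh_lt_tch x hx).
    assert (1 <= 1 + ch x - sh x / x).
    { assert (sh x / x <= ch x). { apply Rmult_le_reg_r with x; auto. unfold Rdiv. rewrite Rmult_assoc, Rinv_l; lra. } lra. }
    unfold ch, sh in *. auto_derive.
    { repeat split; try lra. }
    { pose proof (tanh_poly x hx) as hq. rewrite ?expm in *. pose proof (exp_pos x) as ex. pose proof (exp_gt1 x hx). field. repeat split; try lra.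
      all: apply Rgt_not_eq; nra. }
  - intros x hx. pose proof (Hf_pos x hx). pose proof (sh_pos x hx). pose proof (sh_lt_tch x hx).
    assert (1 <= 1 + ch x - sh x / x).
    { assert (sh x / x <= ch x). { apply Rmult_le_reg_r with x; auto. unfold Rdiv. rewrite Rmult_assoc, Rinv_l; lra. } lra. }
    apply Rdiv_lt_0_compat; auto. apply Rmult_lt_0_compat. apply Rmult_lt_0_compat. apply pow_lt; auto. lra. nra.
  - intros d s hd hs'. destruct (small_ch d s hd hs') as [e [he1 he2]]. exists e. split; auto.
    pose proof (sh_pos e (proj1 he1)). pose proof (sh_lt_tch e (proj1 he1)). pose proof (sh_gt_t e (proj1 he1)).
    pose proof (ch_pos e).
    assert (sh e / e <= ch e). { apply Rmult_le_reg_r with e. lra. unfold Rdiv. rewrite Rmult_assoc, Rinv_l; lra. }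
    assert (0 <= ln (1 + ch e - sh e / e)). { rewrite <- ln_1. apply ln_le; lra. }
    assert (e * ch e / sh e < ch e). { apply Rmult_lt_reg_r with (sh e); auto. unfold Rdiv. rewrite Rmult_assoc, Rinv_l by lra. nra. }
    lra.
Qed.

Lemma frac_lt a b c d : 0 < b -> 0 < d -> a * d < c * b -> a / b < c / d.
Proof. intros hb hd h. apply Rmult_lt_reg_r with (b*d). nra.
  replace (a / b * (b * d)) with (a * d) by (field; lra).
  replace (c / d * (b * d)) with (c * b) by (field; lra). lra. Qed.

Lemma LM_scale k x y : 0 < k -> 0 < x -> 0 < y -> LM (k*x) (k*y) = k * ((x - y) / (ln x - ln y)).
Proof. intros. unfold LM. rewrite !ln_mult by auto.
  replace (ln k + ln x - (ln k + ln y)) with (ln x - ln y) by ring. unfold Rdiv. ring. Qed.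

Lemma LM_sq A G : 0 < G -> G < A -> LM (A^2) (G^2) = (A + G) / 2 * LM A G.
Proof. intros hG hA. unfold LM. rewrite !ln_pow by lra. simpl INR.
  assert (ln G < ln A) by (apply ln_increasing; lra). field. lra. Qed.

Lemma main_alg k t : 0 < k -> 0 < t ->
  let A := k * ch t in let G := k in let L := k * (sh t / t) in
  let I := k * exp (t * ch t / sh t - 1) in
  (LM (A ^ 2) (G ^ 2) = (A + G) / 2 * LM A G /\
   (A + G) / 2 * LM A G > (A + G) / 2 * L /\
   (A + G) / 2 * L > L ^ 2) /\
  LM I G < L /\
  (L < LM I L /\ LM I L < L * ((I - L) / (L - G))).
Proof. intros hk ht A G L I.
  pose proof (ch_gt1 t ht) as hC. pose proof (sh_pos t ht) as hS. pose proof (sh_gt_t t ht) as hSt.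
  pose proof (sh_lt_tch t ht) as hStC. pose proof (ch_sh t) as hcs. pose proof (P1 t ht) as p1.
  pose proof (P2 t ht) as p2. pose proof (P3 t ht) as p3. pose proof (P4 t ht) as p4.
  set (C := ch t) in *. set (S := sh t) in *. set (w := t * C / S - 1) in *. set (E := exp w) in *.
  set (r := S / t) in *.
  assert (hw : 0 < w). { unfold w. assert (1 < t * C / S). { apply Rmult_lt_reg_r with S; auto. unfold Rdiv. rewrite Rmult_assoc, Rinv_l; lra. } lra. }
  assert (hr : 1 < r). { unfold r. apply Rmult_lt_reg_r with t; auto. unfold Rdiv. rewrite Rmult_assoc, Rinv_l; lra. }
  assert (hE : 1 < E). { unfold E. rewrite <- exp_0. apply exp_increasing. lra. }
  assert (hlnC : 0 < ln C) by (rewrite <- ln_1; apply ln_increasing; lra).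
  assert (hL : L = k * r) by reflexivity.
  assert (hLMAG : LM A G = k * ((C - 1) / ln C)).
  { unfold A, G. replace k with (k*1) at 2 by ring. rewrite LM_scale by lra. rewrite ln_1. replace (ln C - 0) with (ln C) by ring. reflexivity. }
  assert (hLMIG : LM I G = k * ((E - 1) / w)).
  { unfold I, G. replace k with (k*1) at 2 by ring. rewrite LM_scale by (try lra; apply exp_pos). rewrite ln_1. fold E. unfold E at 2. rewrite ln_exp. f_equal. f_equal. ring. }
  set (D := w - ln r).
  assert (hD : 1 - t / S < D).
  { unfold D, w. assert (t * C / S - 1 - (t * (C + 1) / S - 2) = 1 - t/S) by (field; lra). lra. }
  assert (htS : t / S < 1). { apply Rmult_lt_reg_r with S; auto. unfold Rdiv. rewrite Rmult_assoc, Rinv_l; lra. }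
  assert (hD0 : 0 < D) by lra.
  assert (hEr : E = r * exp D). { unfold D. rewrite Rminus_def, exp_plus, expm, exp_ln by lra. unfold E. field. lra. }
  assert (hexpD : 1 + D < exp D) by (apply exp_ineq1; lra).
  assert (hrE : r < E) by nra.
  assert (hLMIL : LM I L = k * ((E - r) / D)).
  { unfold I. rewrite hL. rewrite LM_scale by (try lra; apply exp_pos). fold E. unfold E at 2. rewrite ln_exp. reflexivity. }
  split; [split; [|split]|split; [|split]].
  - apply LM_sq. unfold G; lra. unfold A, G. nra.
  - rewrite hLMAG. apply Rmult_gt_compat_l. unfold A, G. nra. rewrite hL. apply Rmult_lt_compat_l; auto.
    unfold r. apply frac_lt; auto.
    assert (S / (C + 1) = (C - 1) / S).
    { unfold Rdiv. apply Rmult_eq_reg_r with ((C+1)*S). 2: (apply Rgt_not_eq; nra).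
      replace (S * /(C+1) * ((C+1)*S)) with (S*S) by (field; lra).
      replace ((C-1) * /S * ((C+1)*S)) with ((C-1)*(C+1)) by (field; lra). nra. }
    assert (t * S / (C + 1) = t * ((C - 1) / S)) by (unfold Rdiv in *; rewrite Rmult_assoc, H; ring).
    rewrite H0 in p2. assert (ln C * S < t * ((C - 1) / S) * S) by (apply Rmult_lt_compat_r; auto).
    replace (t * ((C - 1) / S) * S) with ((C - 1) * t) in H1 by (field; lra). lra.
  - rewrite hL. assert (0 < r) by lra. unfold A, G.
    assert (r < (C + 1) / 2). { unfold r. apply Rmult_lt_reg_r with (2 * t). lra.
      replace (S / t * (2 * t)) with (2 * S) by (field; lra). replace ((C+1)/2 * (2*t)) with (t * (C + 1)) by field. lra. }
    assert (k * r < (k * C + k) / 2) by nra. assert (0 < k * r) by nra.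
    simpl. replace (k * r * (k * r * 1)) with ((k * r) * (k * r)) by ring.
    apply Rmult_lt_compat_r; lra.
  - rewrite hLMIG, hL. apply Rmult_lt_compat_l; auto. unfold r. apply frac_lt; auto.
    unfold w. replace (S * (t * C / S - 1)) with (t * C - S) by (field; lra).
    assert (t * (E - 1) < t * (C - S / t)) by (apply Rmult_lt_compat_l; unfold r in p3; lra).
    replace (t * (C - S / t)) with (t * C - S) in H by (field; lra). lra.
  - rewrite hLMIL, hL. apply Rmult_lt_compat_l; auto.
    apply Rmult_lt_reg_r with D; auto. replace ((E - r) / D * D) with (E - r) by (field; lra). nra.
  - rewrite hLMIL, hL. unfold I, G. fold E.
    replace (k * r * ((k * E - k * r) / (k * r - k))) with (k * (r * (E - r) / (r - 1))) by (field; repeat split; apply Rgt_not_eq; nra).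
    apply Rmult_lt_compat_l; auto. apply frac_lt; try lra.
    assert (r - 1 < r * D).
    { assert (r * (1 - t / S) = r - 1) by (unfold r; field; lra). assert (r * (1 - t/S) < r * D) by (apply Rmult_lt_compat_l; lra). lra. }
    assert (0 < E - r) by lra. nra.
Qed.

Lemma reduce a b : 0 < a -> 0 < b -> b < a ->
  AM a b = sqrt (a*b) * ch ((ln a - ln b)/2) /\ GM a b = sqrt (a*b) /\
  LM a b = sqrt (a*b) * (sh ((ln a - ln b)/2) / ((ln a - ln b)/2)) /\
  IM a b = sqrt (a*b) * exp (((ln a - ln b)/2) * ch ((ln a - ln b)/2) / sh ((ln a - ln b)/2) - 1) /\
  0 < sqrt (a*b) /\ 0 < (ln a - ln b)/2.
Proof. intros ha hb hab.
  assert (hl : ln b < ln a) by (apply ln_increasing; auto).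
  set (t := (ln a - ln b)/2). set (m := exp ((ln a + ln b)/2)).
  assert (hm : 0 < m) by apply exp_pos.
  assert (hk : sqrt (a*b) = m).
  { replace (a*b) with (m*m). apply sqrt_square; lra.
    unfold m. rewrite <- exp_plus. replace ((ln a + ln b)/2 + (ln a + ln b)/2) with (ln a + ln b) by field.
    rewrite exp_plus, !exp_ln; auto. }
  assert (Ha : a = m * exp t).
  { unfold m, t. rewrite <- exp_plus. replace ((ln a + ln b)/2 + (ln a - ln b)/2) with (ln a) by field. rewrite exp_ln; auto. }
  assert (Hb : b = m * exp (-t)).
  { unfold m, t. rewrite <- exp_plus. replace ((ln a + ln b)/2 + - ((ln a - ln b)/2)) with (ln b) by field. rewrite exp_ln; auto. }
  assert (ht : 0 < t) by (unfold t; lra).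
  pose proof (sh_pos t ht) as hS. pose proof (exp_gt1 t ht) as hx.
  assert (Hla : ln a = ln m + t). { rewrite Ha at 1. rewrite ln_mult; [rewrite ln_exp; ring | auto | apply exp_pos]. }
  assert (Hlb : ln b = ln m - t). { rewrite Hb at 1. rewrite ln_mult; [rewrite ln_exp; ring | auto | apply exp_pos]. }
  rewrite hk. split; [|split; [|split; [|split; [|split]]]]; auto.
  - unfold AM, ch. rewrite Ha, Hb. field.
  - unfold LM. replace (ln a - ln b) with (2*t) by (unfold t; field). rewrite Ha, Hb. unfold sh. field. lra.
  - unfold IM. rewrite Hla, Hlb. rewrite Ha, Hb.
    replace ((m * exp t * (ln m + t) - m * exp (- t) * (ln m - t)) / (m * exp t - m * exp (- t)))
      with (ln m + (t * ch t / sh t - 1) + 1).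
    + rewrite !exp_plus, exp_ln by auto. field. apply Rgt_not_eq, exp_pos.
    + unfold ch, sh in *. rewrite expm in *. field. pose proof (exp_pos t). repeat split; try lra.
      all: apply Rgt_not_eq; nra.
Qed.

Lemma case_ba (a b : R) (ha : 0 < a) (hb : 0 < b) (hab : b < a) :
  let A := AM a b in let G := GM a b in let L := LM a b in let I := IM a b in
  (LM (A ^ 2) (G ^ 2) = (A + G) / 2 * LM A G /\
   (A + G) / 2 * LM A G > (A + G) / 2 * L /\
   (A + G) / 2 * L > L ^ 2) /\
  LM I G < L /\
  (L < LM I L /\ LM I L < L * ((I - L) / (L - G))).
Proof. destruct (reduce a b ha hb hab) as [hA [hG [hL [hI [hk ht]]]]].
  cbv zeta. rewrite hA, hG, hL, hI.
  pose proof (main_alg _ _ hk ht) as K. cbv zeta in K. exact K.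
Qed.

Theorem theorem3 (a b : R) (ha : 0 < a) (hb : 0 < b) (hab : a <> b) :
  let A := AM a b in let G := GM a b in let L := LM a b in let I := IM a b in
  (LM (A ^ 2) (G ^ 2) = (A + G) / 2 * LM A G /\
   (A + G) / 2 * LM A G > (A + G) / 2 * L /\
   (A + G) / 2 * L > L ^ 2) /\
  LM I G < L /\
  (L < LM I L /\ LM I L < L * ((I - L) / (L - G))).
Proof.
  destruct (Rlt_or_le b a) as [h|h].
  - exact (case_ba a b ha hb h).
  - assert (h' : a < b) by (destruct h; [auto | subst; contradiction hab; reflexivity]).
    assert (hl : ln a < ln b) by (apply ln_increasing; auto).
    assert (eA : AM a b = AM b a) by (unfold AM; lra).
    assert (eG : GM a b = GM b a) by (unfold GM; rewrite Rmult_comm; reflexivity).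
    assert (eL : LM a b = LM b a) by (unfold LM; field; lra).
    assert (eI : IM a b = IM b a).
    { unfold IM. f_equal. f_equal. field. lra. }
    cbv zeta. rewrite eA, eG, eL, eI. exact (case_ba b a hb ha h').
Qed.
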